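(* Let $\lambda/\mu$ be a border strip, let $P_{\lambda/\mu}=P_{\lambda/\mu}(\mathbf{p})$ be a mobile poset with underlying border strip $\lambda/\mu$, and let $\omega$ be a labeling of it that is a reversed Schur labeling on the border-strip cells and natural on the hanging $d$-complete posets (i.e. $\omega(x)<\omega(y)$ whenever $y$ covers $x$ and $x$ lies in a hanging $d$-complete poset). Then $$e_q^{\mathrm{maj}}(P_{\lambda/\mu},\omega)=\sum_{\mu\to\nu} q^{|P_{\lambda/\nu_1}|}\, e_q^{\mathrm{maj}}(P_{\lambda/\nu},\omega_\nu),$$ where the sum is over all inner corners $u$ of $\lambda/\mu$ (with $\nu$ the partition with $[\nu]=[\mu]\cup\{u\}$), $P_{\lambda/\nu}$ is the poset $P_{\lambda/\mu}$ with the element $u$ removed, $\omega_\nu$ is the restriction of $\omega$ to $P_{\lambda/\nu}$, and $P_{\lambda/\nu_1}$ is the subposet consisting of the border-strip cells of content less than $c(u)$ together with all elements of the $d$-complete posets hanging from those cells.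
   Context: English notation: $[\lambda]=\{(i,j):1\le i\le\ell(\lambda),1\le j\le\lambda_i\}$, $[\lambda/\mu]=[\lambda]\setminus[\mu]$, content $c(i,j)=j-i$. A border strip is a skew shape whose diagram is edge-connected with no $2\times2$ square. The border strip poset on $[\lambda/\mu]$ has $(i,j)\le(i',j')$ iff $i\ge i'$ and $j\ge j'$; an inner corner is a cell $u\in[\lambda/\mu]$ with $[\mu]\cup\{u\}$ a partition diagram (these are maximal). A mobile poset is obtained by choosing for each cell $x$ a finite (possibly empty) family of disjoint connected $d$-complete posets (Proctor), each with a unique maximal element, and letting $x$ cover each of these maximal elements. A reversed Schur labeling on the border strip: listing strip cells in increasing order of content, their labels strictly decrease. For a poset $R$ with injective labeling $\omega_R$ into $\mathbb{Z}$ and $|R|=r$, each order-preserving bijection $g:R\to[r]$ gives the word $\sigma=\omega_R\circ g^{-1}$; $\mathrm{maj}(\sigma)=\sum_{i:\sigma_i>\sigma_{i+1}}i$, and $e_q^{\mathrm{maj}}(R,\omega_R)=\sum_g q^{\mathrm{maj}(\omega_R\circ g^{-1})}$. *)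

(* Defs.v *)
From HB Require Import structures.
From mathcomp Require Import all_boot all_order all_algebra.
From mathcomp Require Import boolp.
Set Implicit Arguments. Unset Strict Implicit. Unset Printing Implicit Defensive.
Import Order.TTheory GRing.Theory Num.Theory.

Definition cell := (nat * nat)%type.

Definition is_partition (la : seq nat) : bool :=
  sorted geq la && all (fun x => 0 < x) la.

Definition in_diag (la : seq nat) (c : cell) : bool :=
  [&& 0 < c.1, c.1 <= size la, 0 < c.2 & c.2 <= nth 0 la c.1.-1].

Definition in_skew (la mu : seq nat) (c : cell) : bool :=
  in_diag la c && ~~ in_diag mu c.

Definition content (c : cell) : int := (Posz c.2 - Posz c.1)%R.

Definition adj (c d : cell) : bool :=
  ((c.1 == d.1) && ((c.2 == d.2.+1) || (d.2 == c.2.+1))) ||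
  ((c.2 == d.2) && ((c.1 == d.1.+1) || (d.1 == c.1.+1))).

Definition border_strip (la mu : seq nat) : Prop :=
  [/\ (forall c, in_diag mu c -> in_diag la c),
      (exists c, in_skew la mu c),
      (forall c d, in_skew la mu c -> in_skew la mu d ->
         exists s : seq cell, [/\ path adj c s, last c s = d & all (in_skew la mu) s])
    & (forall i j, ~ [/\ in_skew la mu (i, j), in_skew la mu (i.+1, j),
                        in_skew la mu (i, j.+1) & in_skew la mu (i.+1, j.+1)])].

Definition strip_le (c d : cell) : bool := (d.1 <= c.1) && (d.2 <= c.2).

Definition inner_corner (la mu : seq nat) (u : cell) : Prop :=
  in_skew la mu u /\
  exists nu : seq nat, is_partition nu /\ forall c, in_diag nu c = in_diag mu c || (c == u).

Section Posets.
Variable T : finType.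
Implicit Types (le : rel T) (D I J : {set T}).

Definition partial_order le : Prop :=
  [/\ reflexive le, antisymmetric le & transitive le].

Definition covers D le (x y : T) : bool :=
  [&& x \in D, y \in D, x != y, le x y &
      [forall z in D, ~~ [&& z != x, z != y, le x z & le z y]]].

Definition interval D le (w z : T) : {set T} := [set y in D | le w y && le y z].

Definition convex D le I : Prop :=
  I \subset D /\
  forall x y z, x \in I -> y \in D -> z \in I -> le x y -> le y z -> y \in I.

(* the double-tailed diamond d_k(1) on {0,..,2k-3}: a chain of k-2 elements,
   two incomparable elements (indices k-2, k-1), then a chain of k-2 elements;
   the top is 2k-3, and {0,..,2k-4} is d_k(1)^- (top removed) *)
Definition dk_lvl (k i : nat) : nat :=
  if i < k - 2 then i else if i < k then k - 2 else i.-1.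
Definition dk_rel (k : nat) (i j : nat) : bool := (i == j) || (dk_lvl k i < dk_lvl k j).

Definition iso_to le (n : nat) (r : nat -> nat -> bool) I : Prop :=
  exists f : 'I_n -> T,
    [/\ injective f, I = f @: [set: 'I_n] &
        forall i j : 'I_n, le (f i) (f j) = r i j].

Definition dk_interval D le (k : nat) (w z : T) : Prop :=
  [/\ w \in D, z \in D & iso_to le (2 * k - 2) (dk_rel k) (interval D le w z)].

Definition dkm_convex D le (k : nat) I : Prop :=
  convex D le I /\ iso_to le (2 * k - 3) (dk_rel k) I.

Definition d_complete D le : Prop :=
  forall k, 3 <= k ->
  [/\
      (forall I, dkm_convex D le k I ->
         exists w z, [/\ z \notin I, z |: I = interval D le w z & dk_interval D le k w z]),
      (forall w z y, dk_interval D le k w z -> covers D le y z -> y \in interval D le w z)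
    &
      (forall I J x y, dkm_convex D le k I -> dkm_convex D le k J ->
         x \in I -> (forall a, a \in I -> le x a) ->
         y \in J -> (forall a, a \in J -> le y a) ->
         I :\ x = J :\ y -> I = J)].

Definition connected_poset D le : Prop :=
  forall x y, x \in D -> y \in D ->
    exists s : seq T,
      [/\ path (fun a b => [&& a \in D, b \in D & (le a b || le b a)]) x s & last x s = y].

(* The poset (T, le) is a mobile poset with underlying border strip la/mu:
   - [strip] is the set of border-strip elements, [pos] identifies it with [la/mu];
   - every other element belongs to a hanging poset whose maximal element is [top x];
   - [anchor x] is the border-strip cell from which x hangs (anchor x = x on the strip);
   - the order is: the border strip poset on the strip, the order of each hanging
     poset inside it, and each hanging poset lies below its anchor cell (which covers
     the hanging poset's maximal element); hanging posets are connected d-complete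
     with a unique maximal element. *)
Definition hanging (strip : {set T}) (top : T -> T) (t : T) : {set T} :=
  [set y | (y \notin strip) && (top y == t)].

Definition mobile_poset (la mu : seq nat) le (strip : {set T}) (pos : T -> cell)
  (anchor top : T -> T) : Prop :=
  [/\ partial_order le,
      {in strip &, injective pos},
      (forall c, in_skew la mu c <-> exists2 x, x \in strip & pos x = c),
      (forall x, anchor x \in strip) &
      (forall x, x \in strip -> anchor x = x)] /\
  [/\ (forall a b, b \in strip -> le a b = strip_le (pos (anchor a)) (pos b)),
      (forall a b, a \in strip -> b \notin strip -> ~~ le a b),
      (forall a b, a \notin strip -> b \notin strip -> le a b -> top a = top b),
      (forall x, x \notin strip ->
         [/\ top x \notin strip, top (top x) = top x & anchor x = anchor (top x)]) &
      (forall t, t \notin strip -> top t = t ->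
         [/\ connected_poset (hanging strip top t) le,
             d_complete (hanging strip top t) le
           & forall y, y \in hanging strip top t -> le y t])].

Definition maj (s : seq int) : nat :=
  \sum_(i < (size s).-1 | (nth 0 s i.+1 < nth 0 s i)%R) i.+1.

(* s = (g^-1(1), ..., g^-1(r)) for an order-preserving bijection g : S -> [r] *)
Definition linext le (S : {set T}) (s : seq T) : bool :=
  perm_eq s (enum S) &&
  [forall x in S, forall y in S, le x y ==> (index x s <= index y s)].

Definition eqmaj le (omega : T -> int) (S : {set T}) : {poly int} :=
  (\sum_(s <- permutations (enum S) | linext le S s) 'X^(maj (map omega s)))%R.

End Posets.

(* Main.v *)
Require Import Defs.
From HB Require Import structures.
From mathcomp Require Import all_boot all_order all_algebra.
From mathcomp Require Import boolp.
From mathcomp Require Import zify ring.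
Import Order.TTheory GRing.Theory Num.Theory.
Set Implicit Arguments. Unset Strict Implicit. Unset Printing Implicit Defensive.
Local Open Scope ring_scope.
Fixpoint qb (n k : nat) : {poly int} :=
  match n, k with
  | _, 0 => 1%R
  | 0, _.+1 => 0%R
  | m.+1, j.+1 => (qb m j + 'X^(j.+1) * qb m j.+1)%R
  end.

Lemma qb0 n : qb n 0 = 1. Proof. by case: n. Qed.

Lemma qbS n k : qb n.+1 k.+1 = qb n k + 'X^(k.+1) * qb n k.+1. Proof. by []. Qed.

Lemma qb_gt n k : (n < k)%N -> qb n k = 0.
Proof.
elim: n k => [|n IH] [|k] //= lt; rewrite !IH ?mulr0 ?addr0 //; lia.
Qed.

Lemma qbnn n : qb n n = 1.
Proof. by elim: n => //= n ->; rewrite qb_gt // mulr0 addr0. Qed.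

Lemma qbS2 n k : (k <= n)%N -> qb n.+1 k.+1 = 'X^(n - k) * qb n k + qb n k.+1.
Proof.
elim: n k => [|n IH] k kn.
  have -> : k = 0%N by lia.
  by rewrite /= !mulr0 !addr0 expr0 mul1r.
case: k kn => [|k] kn.
  change (qb n.+2 1) with (qb n.+1 0 + 'X^1 * qb n.+1 1).
  rewrite {1}(IH 0%N) // !qb0 subn0 mulr1 expr1.
  change (qb n.+1 1) with (qb n 0 + 'X^1 * qb n 1).
  rewrite qb0 expr1 exprS. ring.
rewrite [LHS]qbS subSS {1}(IH k); last by lia.
rewrite [in RHS]qbS.
have [kn'|kn'] := leqP k.+1 n.
  rewrite {1}(IH k.+1) // [in RHS]qbS.
  rewrite !mulrDr !mulrA -!exprD.
  have -> : (k.+2 + (n - k.+1) = n - k + k.+1)%N by lia.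
  ring.
have -> : k = n by lia.
rewrite (qb_gt (ltnSn n)) (qb_gt (ltnSn n.+1)) ?mulr0 ?addr0 subnn; ring.

Qed.

Section Alg.
Variables (R : comNzRingType) (I : finType) (P : pred I).
Lemma distrL1 (c d E : R) (F G : I -> R) :
  c * (d * E * \sum_(i | P i) F i * G i) = \sum_(i | P i) (c * d * F i) * (E * G i).
Proof. rewrite !mulr_sumr; apply: eq_bigr => i _; ring. Qed.
Lemma distrL2 (c d E : R) (F G : I -> R) :
  c * (d * (\sum_(i | P i) F i * G i) * E) = \sum_(i | P i) (c * d * F i) * (G i * E).
Proof. rewrite -(mulrA d) mulr_suml !mulr_sumr; apply: eq_bigr => i _; ring. Qed.
Lemma distrL3 (J : finType) (Q : pred J) (q : R) (F G : I -> R) (F' G' : J -> R) :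
  q * (\sum_(i | P i) F i * G i) * (\sum_(j | Q j) F' j * G' j) =
  \sum_(i | P i) \sum_(j | Q j) (q * (F i * F' j)) * (G i * G' j).
Proof.
rewrite [q * _]mulr_sumr mulr_suml; apply: eq_bigr => i _.
rewrite mulr_sumr; apply: eq_bigr => j _; ring.
Qed.
End Alg.

Lemma key (u v y : int) (a b : nat) : u != v ->
  'X^((a + b).+2 * (y < u)%R) * qb (a + b).+1 a * 'X^(b.+1 * (u < v)%R) +
  'X^((a + b).+2 * (y < v)%R) * qb (a + b).+1 a.+1 * 'X^(a.+1 * (v < u)%R) =
  qb (a + b).+2 a.+1 * ('X^(a.+1 * (y < u)%R) * 'X^(b.+1 * (y < v)%R)) :> {poly int}.
Proof.
move=> uv.
have P1 := qbS (a + b).+1 a.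
have P2 := @qbS2 (a + b).+1 a (leqW (leq_addr b a)).
have e : ((a + b).+1 - a = b.+1)%N by lia.
rewrite e in P2.
have eN : 'X^((a + b).+2) = 'X^(a.+1) * 'X^(b.+1) :> {poly int} by rewrite -exprD; congr (_ ^+ _); lia.
have [uv'|vu'|e'] := ltgtP u v; last by rewrite e' eqxx in uv.
- case yu: (y < u); case yv: (y < v); rewrite ?muln1 ?muln0 ?expr0 ?mulr1 ?mul1r.
  + rewrite eN P2; ring.
  + by move: yv; rewrite (lt_trans yu uv').
  + rewrite eN P1; ring.
  + rewrite P2; ring.
- case yu: (y < u); case yv: (y < v); rewrite ?muln1 ?muln0 ?expr0 ?mulr1 ?mul1r.
  + rewrite eN P1; ring.
  + rewrite eN P2; ring.
  + by move: yu; rewrite (lt_trans yv vu').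
  + rewrite P1; ring.
Qed.

Local Close Scope ring_scope.

Section Gen.
Variable T : finType.
Variable le : rel T.

Definition maxin (S : {set T}) m := [forall z in S, le m z ==> (z == m)].
Definition lastopt (s : seq T) := if s is x :: s' then Some (last x s') else None.

Lemma lastopt_rcons s m : lastopt (rcons s m) = Some m.
Proof. by case: s => [|x s] //=; rewrite last_rcons. Qed.

Lemma perm_enumP (S : {set T}) s : reflect (uniq s /\ s =i S) (perm_eq s (enum S)).
Proof.
apply: (iffP idP).
  move=> h; split; first by rewrite (perm_uniq h) enum_uniq.
  by move=> x; rewrite (perm_mem h) mem_enum.
case=> u m; apply: uniq_perm => // [|x]; first exact: enum_uniq.
by rewrite m mem_enum.
Qed.

Lemma index_rcons_in (x : T) s m : x \in s -> index x (rcons s m) = index x s.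
Proof. by move=> xs; rewrite -cats1 index_cat xs. Qed.

Lemma index_rcons_last (s : seq T) m : m \notin s -> index m (rcons s m) = size s.
Proof. by move=> ms; rewrite -cats1 index_cat (negbTE ms) /= eqxx addn0. Qed.

Lemma linext_rcons (S : {set T}) m s : m \in S -> maxin S m ->
  linext le S (rcons s m) = linext le (S :\ m) s.
Proof.
move=> mS mx; apply/idP/idP.
  case/andP=> /perm_enumP [u me] /forall_inP o.
  move: u; rewrite rcons_uniq => /andP [ms us].
  apply/andP; split.
    apply/perm_enumP; split=> // x; rewrite in_setD1.
    rewrite -me mem_rcons in_cons; case: eqP => [->|//]; by rewrite (negbTE ms).
  apply/forall_inP => x; rewrite in_setD1 => /andP [xm xS].
  apply/forall_inP => y; rewrite in_setD1 => /andP [ym yS].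
  apply/implyP => lxy.
  have := implyP (forall_inP (o x xS) y yS) lxy.
  have xs : x \in s by move: (me x); rewrite mem_rcons in_cons (negbTE xm) xS.
  have ys : y \in s by move: (me y); rewrite mem_rcons in_cons (negbTE ym) yS.
  by rewrite !index_rcons_in.
case/andP=> /perm_enumP [u me] /forall_inP o.
have ms : m \notin s by rewrite me in_setD1 eqxx.
apply/andP; split.
  apply/perm_enumP; split; first by rewrite rcons_uniq ms u.
  move=> x; rewrite mem_rcons in_cons me in_setD1.
  by case: eqP => [->|] //=; rewrite mS.
apply/forall_inP => x xS; apply/forall_inP => y yS; apply/implyP => lxy.
have [xm|xm] := eqVneq x m.
  subst x; have /eqP -> := implyP (forall_inP mx y yS) lxy; by [].
have xs : x \in s by rewrite me in_setD1 xm.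
rewrite (index_rcons_in _ xs).
have [ym|ym] := eqVneq y m.
  subst y; rewrite (index_rcons_last ms); apply: ltnW; by rewrite index_mem.
have ys : y \in s by rewrite me in_setD1 ym.
rewrite (index_rcons_in _ ys).
have : x \in S :\ m by rewrite in_setD1 xm.
move/o/forall_inP => o'; have := o' y; rewrite in_setD1 ym yS => /(_ isT).
by move/implyP; apply.
Qed.

Lemma linext_last (S : {set T}) s m : linext le S s -> lastopt s = Some m ->
  exists s', [/\ s = rcons s' m, m \in S & maxin S m].
Proof.
case/lastP: s => [//|s' x] L; rewrite lastopt_rcons => -[<-]; exists s'; split=> //.
  by case/andP: L => /perm_enumP [_ <-]; rewrite mem_rcons mem_head.
case/andP: L => /perm_enumP [u me] /forall_inP o.
move: (u); rewrite rcons_uniq => /andP [xs us].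
have xS : x \in S by rewrite -me mem_rcons mem_head.
apply/forall_inP => z zS; apply/implyP => lxz.
have := implyP (forall_inP (o x xS) z zS) lxz.
rewrite (index_rcons_last xs).
have [//|zx] := eqVneq z x.
have zs : z \in s' by move: (me z); rewrite zS mem_rcons in_cons (negbTE zx).
by rewrite (index_rcons_in _ zs) leqNgt index_mem zs.
Qed.


Lemma linext_perm (S : {set T}) s : linext le S s -> perm_eq s (enum S).
Proof. by case/andP. Qed.

Lemma linext_split (R : zmodType) (S : {set T}) (F : seq T -> R) : S != set0 ->
  (\sum_(s <- permutations (enum S) | linext le S s) F s =
   \sum_(m in S | maxin S m)
     \sum_(s <- permutations (enum (S :\ m)) | linext le (S :\ m) s) F (rcons s m))%R.
Proof.
case/set0Pn=> x0 x0S.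
transitivity (\sum_(s <- permutations (enum S) | linext le S s)
   \sum_(m in S | maxin S m) (if lastopt s == Some m then F s else 0))%R.
  apply: eq_bigr => s L.
  have : exists m, lastopt s = Some m.
    case: s L => [|y s] L; last by exists (last y s).
    by move: L => /linext_perm /perm_enumP [_ /(_ x0)]; rewrite x0S.
  case=> m0 lm0; have [s' [es m0S m0x]] := linext_last L lm0.
  rewrite -big_mkcondr /= (big_pred1 m0) // => m.
  rewrite lm0 /=; case: eqP => [[<-]|]; first by rewrite m0S m0x eqxx.
  by move=> ne; rewrite andbF; apply/esym/eqP => e; apply: ne; rewrite e.
rewrite exchange_big /=; apply: eq_bigr => m /andP [mS mx].
rewrite -big_mkcondr /=.
rewrite -big_filter -[RHS]big_filter -(big_map (rcons^~ m) xpredT F).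
apply: perm_big; apply: uniq_perm.
- by apply: filter_uniq; apply: permutations_uniq.
- rewrite map_inj_uniq; last exact: rcons_injl.
  by apply: filter_uniq; apply: permutations_uniq.
move=> s; rewrite mem_filter; apply/idP/idP.
  case/andP=> /andP [L /eqP lm] _.
  have [s' [es _ _]] := linext_last L lm; subst s.
  apply: map_f; rewrite mem_filter -(linext_rcons _ mS mx) L mem_permutations.
  by rewrite linext_perm // -(linext_rcons _ mS mx).
case/mapP=> s' ; rewrite mem_filter => /andP [L _] ->.
rewrite lastopt_rcons eqxx andbT (linext_rcons _ mS mx) L /= mem_permutations.
by rewrite linext_perm // (linext_rcons _ mS mx).
Qed.


Lemma maj_rcons (w : seq int) a y :
  maj (rcons (rcons w a) y) = maj (rcons w a) + (size w).+1 * (y < a)%R.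
Proof.
rewrite /maj !size_rcons /= big_mkcond big_ord_recr /= -big_mkcond /=.
have e1 : nth 0%R (rcons (rcons w a) y) (size w).+1 = y.
  by rewrite nth_rcons size_rcons ltnn eqxx.
have e2 : nth 0%R (rcons (rcons w a) y) (size w) = a.
  by rewrite nth_rcons size_rcons ltnSn nth_rcons ltnn eqxx.
rewrite e1 e2; congr (_ + _); last by case: (y < a)%R; rewrite ?muln1 ?muln0.
apply: eq_bigl => i.
by rewrite (nth_rcons _ (rcons w a) y i.+1) (nth_rcons _ (rcons w a) y i) size_rcons ltnS (ltn_ord i) ltnW // ltnS (ltn_ord i).
Qed.

Variable omega : T -> int.

Definition Esum (y : int) (S : {set T}) : {poly int} :=
  (\sum_(s <- permutations (enum S) | linext le S s) 'X^(maj (rcons (map omega s) y)))%R.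

Lemma linext_size S s : linext le S s -> size s = #|S|.
Proof. by move/linext_perm/perm_size; rewrite -cardE. Qed.

Lemma Esum_rec y S : S != set0 ->
  Esum y S = (\sum_(m in S | maxin S m) 'X^(#|S| * (y < omega m)%R) * Esum (omega m) (S :\ m))%R.
Proof.
move=> SN; rewrite /Esum linext_split //; apply: eq_bigr => m /andP [mS _].
rewrite mulr_sumr; apply: eq_bigr => s L.
rewrite map_rcons maj_rcons size_map (linext_size L) -exprD addnC.
by rewrite (cardsD1 m S) mS.
Qed.

Lemma eqmaj_rec S : S != set0 ->
  eqmaj le omega S = (\sum_(m in S | maxin S m) Esum (omega m) (S :\ m))%R.
Proof.
move=> SN; rewrite /eqmaj linext_split //; apply: eq_bigr => m _.
by apply: eq_bigr => s _; rewrite map_rcons.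
Qed.

Lemma linext0 : linext le set0 [::].
Proof.
apply/andP; split; last by apply/forall_inP => x; rewrite in_set0.
by apply/perm_enumP; split => // x; rewrite in_set0.
Qed.

Lemma Esum0 y : Esum y set0 = 1%R.
Proof.
rewrite /Esum enum_set0 /= big_cons big_nil linext0 addr0.
by rewrite /maj /= big_ord0 expr0.
Qed.

Lemma eqmaj0 : eqmaj le omega set0 = 1%R.
Proof.
by rewrite /eqmaj enum_set0 /= big_cons big_nil linext0 addr0 /maj /= big_ord0 expr0.
Qed.


Definition cross (A B : {set T}) :=
  forall a b, a \in A -> b \in B -> ~~ le a b /\ ~~ le b a.

Lemma maxinU_l (A B : {set T}) m : m \in A -> cross A B -> maxin (A :|: B) m = maxin A m.
Proof.
move=> mA cr; apply/forall_inP/forall_inP => h z.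
  by move=> zA; apply: h; rewrite in_setU zA.
rewrite in_setU => /orP [zA|zB]; first exact: h.
by have [/negbTE -> _] := cr _ _ mA zB.
Qed.

Lemma maxinU_r (A B : {set T}) m : m \in B -> cross A B -> maxin (A :|: B) m = maxin B m.
Proof.
move=> mB cr; apply/forall_inP/forall_inP => h z.
  by move=> zB; apply: h; rewrite in_setU zB orbT.
rewrite in_setU => /orP [zA|zB]; last exact: h.
by have [_ /negbTE ->] := cr _ _ zA mB.
Qed.

Lemma sum_maxU (R : zmodType) (A B : {set T}) (F : T -> R) : [disjoint A & B] -> cross A B ->
  (\sum_(m in A :|: B | maxin (A :|: B) m) F m =
   \sum_(m in A | maxin A m) F m + \sum_(m in B | maxin B m) F m)%R.
Proof.
move=> dAB cr; rewrite big_mkcondr.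
rewrite (eq_bigl [predU A & B]); last by move=> x; rewrite in_setU.
rewrite bigU //; congr (_ + _)%R; rewrite [RHS]big_mkcondr; apply: eq_bigr => m mX.
  by rewrite maxinU_l.
by rewrite maxinU_r.
Qed.

Lemma cross_D1l (A B : {set T}) m : cross A B -> cross (A :\ m) B.
Proof. by move=> cr a b; rewrite in_setD1 => /andP [_ aA]; apply: cr. Qed.

Lemma cross_D1r (A B : {set T}) m : cross A B -> cross A (B :\ m).
Proof. by move=> cr a b aA; rewrite in_setD1 => /andP [_ bB]; apply: cr. Qed.

Lemma card_pos (A : {set T}) : A != set0 -> exists a, #|A| = a.+1.
Proof. by rewrite -cards_eq0; case: #|A| => // a _; exists a. Qed.

Lemma Esum_union (oinj : injective omega) n : forall (A B : {set T}),
  (#|A| + #|B| = n)%N -> [disjoint A & B] -> cross A B -> forall y,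
  Esum y (A :|: B) = (qb (#|A| + #|B|) #|A| * Esum y A * Esum y B)%R.
Proof.
elim: n => [|n IH] A B hn dAB cr y.
  have A0 : A = set0 by apply: cards0_eq; lia.
  have B0 : B = set0 by apply: cards0_eq; lia.
  by rewrite A0 B0 setU0 cards0 Esum0 /= !mulr1.
have [A0|AN] := eqVneq A set0.
  by rewrite A0 set0U cards0 add0n qb0 Esum0 !mul1r.
have [B0|BN] := eqVneq B set0.
  by rewrite B0 setU0 cards0 addn0 qbnn Esum0 !mulr1 mul1r.
have [a ea] := card_pos AN; have [b eb] := card_pos BN.
have UN : A :|: B != set0.
  by apply: contra AN => /eqP e; apply/eqP; apply/setP => x; move: e => /setP /(_ x); rewrite in_setU in_set0; case: (x \in A).
rewrite Esum_rec // sum_maxU //.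
have cardU : #|A :|: B| = (a + b).+2.
  by move: (cardsUI A B); rewrite disjoint_setI0 // cards0 addn0 ea eb; lia.
rewrite cardU.
transitivity (\sum_(m in A | maxin A m) \sum_(m' in B | maxin B m')
   ('X^((a + b).+2 * (y < omega m)%R) * qb (a + b).+1 a * 'X^(b.+1 * (omega m < omega m')%R)) *
   (Esum (omega m) (A :\ m) * Esum (omega m') (B :\ m')) +
  \sum_(m in A | maxin A m) \sum_(m' in B | maxin B m')
   ('X^((a + b).+2 * (y < omega m')%R) * qb (a + b).+1 a.+1 * 'X^(a.+1 * (omega m' < omega m)%R)) *
   (Esum (omega m) (A :\ m) * Esum (omega m') (B :\ m')))%R.
  congr (_ + _)%R.
    apply: eq_bigr => m /andP [mA mx].
    have mB : m \notin B by rewrite (disjointFr dAB mA).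
    have -> : (A :|: B) :\ m = (A :\ m) :|: B.
      by rewrite setDUl; congr (_ :|: _); apply/setP => x; rewrite in_setD1; case: eqP => // ->; rewrite (negbTE mB).
    have cA : #|A :\ m| = a by move: ea; rewrite (cardsD1 m A) mA; lia.
    rewrite (IH (A :\ m) B); first last.
    - exact: cross_D1l.
    - by apply: disjointWl dAB; apply: subD1set.
    - by lia.
    rewrite cA eb (Esum_rec _ BN) eb distrL1.
    have -> : (a + b.+1)%N = (a + b).+1 by lia.
    by [].
  rewrite exchange_big /=.
  apply: eq_bigr => m' /andP [mB mx].
  have mA : m' \notin A by rewrite (disjointFl dAB mB).
  have -> : (A :|: B) :\ m' = A :|: (B :\ m').
    by rewrite setDUl; congr (_ :|: _); apply/setP => x; rewrite in_setD1; case: eqP => // ->; rewrite (negbTE mA).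
  have cB : #|B :\ m'| = b by move: eb; rewrite (cardsD1 m' B) mB; lia.
  rewrite (IH A (B :\ m')); first last.
  - exact: cross_D1r.
  - by apply: disjointWr dAB; apply: subD1set.
  - by lia.
  rewrite cB ea (Esum_rec _ AN) ea distrL2.
  have -> : (a.+1 + b)%N = (a + b).+1 by lia.
  by [].
rewrite -big_split /= (Esum_rec _ AN) (Esum_rec _ BN) ea eb distrL3.
apply: eq_bigr => m /andP [mA _].
rewrite -big_split /=; apply: eq_bigr => m' /andP [mB _].
rewrite -mulrDl key; last first.
  apply/eqP => /oinj e; move: (disjointFr dAB mA); rewrite e mB; by [].
have -> : (a + b.+1)%N = (a + b).+1 by lia.
by rewrite -qbS.
Qed.


Lemma Esum_hi y (S : {set T}) : (forall m, m \in S -> maxin S m -> (y < omega m)%R) ->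
  Esum y S = ('X^#|S| * eqmaj le omega S)%R.
Proof.
move=> h; have [->|SN] := eqVneq S set0; first by rewrite Esum0 eqmaj0 cards0 expr0 mulr1.
rewrite Esum_rec // eqmaj_rec // mulr_sumr; apply: eq_bigr => m /andP [mS mx].
by rewrite h // muln1.
Qed.

Lemma Esum_lo y (S : {set T}) : (forall m, m \in S -> maxin S m -> (omega m < y)%R) ->
  Esum y S = eqmaj le omega S.
Proof.
move=> h; have [->|SN] := eqVneq S set0; first by rewrite Esum0 eqmaj0.
rewrite Esum_rec // eqmaj_rec //; apply: eq_bigr => m /andP [mS mx].
have -> : (y < omega m)%R = false by apply/negbTE; rewrite -leNgt ltW // h.
by rewrite muln0 expr0 mul1r.
Qed.

Lemma big_label : exists y0 : int, forall m, (omega m < y0)%R.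
Proof.
exists (1 + \sum_(x : T) `|omega x|)%R => m.
apply: ltr_pwDl => //; rewrite (bigD1 m) //=.
apply: le_trans (ler_norm _) _; rewrite lerDl.
by apply: sumr_ge0 => x _; exact: normr_ge0.
Qed.

Lemma Esum_top (oinj : injective omega) y (A B : {set T}) : [disjoint A & B] -> cross A B ->
  (forall m, m \in A -> maxin A m -> (y < omega m)%R) ->
  (forall m, m \in B -> maxin B m -> (omega m < y)%R) ->
  Esum y (A :|: B) = ('X^#|A| * eqmaj le omega (A :|: B))%R.
Proof.
move=> dAB cr hA hB.
have [y0 hy0] := big_label.
have L (S : {set T}) : Esum y0 S = eqmaj le omega S.
  by apply: Esum_lo => m _ _; exact: hy0.
rewrite -L !(Esum_union oinj erefl dAB cr) (Esum_hi hA) (Esum_lo hB) !L.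
ring.
Qed.

End Gen.


Lemma part_mono la : is_partition la -> forall i k, i <= k -> nth 0 la k <= nth 0 la i.
Proof.
case/andP=> so _ i k ik.
have [ks|ks] := ltnP k (size la); last by rewrite nth_default.
have tr : transitive geq by move=> ? ? ? /= h1 h2; exact: leq_trans h2 h1.
have rf : reflexive geq by move=> ?; exact: leqnn.
have := @sorted_leq_nth _ geq tr rf 0 la so i k.
by apply => //; rewrite inE; lia.
Qed.

Lemma part_pos la : is_partition la -> forall k, k < size la -> 0 < nth 0 la k.
Proof. by case/andP=> _ /all_nthP h k ks; apply: h. Qed.

Lemma diag_down la i j i' j' : is_partition la -> in_diag la (i', j') ->
  0 < i -> i <= i' -> 0 < j -> j <= j' -> in_diag la (i, j).
Proof.
move=> pl; rewrite /in_diag /= => /and4P [_ h1 _ h2] *.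
have := part_mono pl (_ : i.-1 <= i'.-1).
move=> /(_ ltac:(lia)) h3; apply/and4P; split; lia.
Qed.

Section Geo.
Variables la mu : seq nat.
Hypothesis pla : is_partition la.
Hypothesis pmu : is_partition mu.

Lemma skew_pos c : in_skew la mu c -> 0 < c.1 /\ 0 < c.2.
Proof. by case/andP=> /and4P [h1 _ h2 _] _. Qed.

Lemma skew_convex i j i' j' k l : in_skew la mu (i, j) -> in_skew la mu (i', j') ->
  i <= k <= i' -> j <= l <= j' -> in_skew la mu (k, l).
Proof.
move=> s1 s2 /andP [ik ki] /andP [jl lj].
have [/= p1 p2] := skew_pos s1.
case/andP: s2 => d2 _; case/andP: s1 => _ n1.
apply/andP; split; first by apply: (diag_down pla d2) => /=; lia.
apply: contra n1 => d; apply: (diag_down pmu d) => /=; lia.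
Qed.

Hypothesis no2 : forall i j, ~ [/\ in_skew la mu (i, j), in_skew la mu (i.+1, j),
                        in_skew la mu (i, j.+1) & in_skew la mu (i.+1, j.+1)].

Lemma no_se i j i' j' : in_skew la mu (i, j) -> in_skew la mu (i', j') -> i < i' -> j < j' -> False.
Proof.
move=> s1 s2 ii jj; apply: (no2 (i := i) (j := j)); split.
- by [].
- by apply: (skew_convex s1 s2) => /=; lia.
- by apply: (skew_convex s1 s2) => /=; lia.
- by apply: (skew_convex s1 s2) => /=; lia.
Qed.

Lemma content_inj a b : in_skew la mu a -> in_skew la mu b -> content a = content b -> a = b.
Proof.
case: a => i j; case: b => i' j' s1 s2; rewrite /content /= => e.
have [ii|ii|ii] := ltngtP i i'.
- by exfalso; apply: (no_se s1 s2 ii); lia.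
- by exfalso; apply: (no_se s2 s1 ii); lia.
- by subst i'; congr pair; lia.
Qed.

Lemma content_lt a b : in_skew la mu a -> in_skew la mu b -> (content a < content b)%R ->
  b.1 <= a.1 /\ a.2 <= b.2.
Proof.
case: a => i j; case: b => i' j' s1 s2; rewrite /content /= => e.
split.
  rewrite leqNgt; apply/negP => ii; apply: (no_se s1 s2 ii); lia.
rewrite leqNgt; apply/negP => jj; apply: (no_se s2 s1 _ jj); lia.
Qed.


Lemma corner_mu u : inner_corner la mu u ->
  (forall i', 0 < i' < u.1 -> in_diag mu (i', u.2)) /\
  (forall j', 0 < j' < u.2 -> in_diag mu (u.1, j')).
Proof.
case: u => i j [su [nu [pnu hnu]]]; have [/= pi pj] := skew_pos su.
have dn : in_diag nu (i, j) by rewrite hnu eqxx orbT.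
split=> [i' /andP [h1 h2]|j' /andP [h1 h2]] /=.
  have := diag_down pnu dn h1 (ltnW h2) pj (leqnn j).
  by rewrite hnu => /orP [//|/eqP [e]]; lia.
have := diag_down pnu dn pi (leqnn i) h1 (ltnW h2).
by rewrite hnu => /orP [//|/eqP [e]]; lia.
Qed.

Lemma corner_max u : inner_corner la mu u ->
  forall d, in_skew la mu d -> d.1 <= u.1 -> d.2 <= u.2 -> d = u.
Proof.
case: u => i j [su [nu [pnu hnu]]] [a b] sd /= h1 h2.
have dn : in_diag nu (i, j) by rewrite hnu eqxx orbT.
have [/= pa pb] := skew_pos sd.
have := diag_down pnu dn pa h1 pb h2.
rewrite hnu => /orP [d|/eqP //].
by case/andP: sd => _; rewrite d.
Qed.

Lemma max_corner u : in_skew la mu u ->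
  (forall d, in_skew la mu d -> d.1 <= u.1 -> d.2 <= u.2 -> d = u) -> inner_corner la mu u.
Proof.
case: u => i j su hmax; split => //.
have [/= pi pj] := skew_pos su.
case/andP: (su) => dla nmu.
have up : forall i', 0 < i' < i -> in_diag mu (i', j).
  move=> i' /andP [h1 h2]; apply: contraT => nd.
  have sk : in_skew la mu (i', j).
    by rewrite /in_skew nd andbT; apply: (diag_down pla dla) => //; lia.
  by have := hmax _ sk; rewrite /= => /(_ (ltnW h2) (leqnn j)) [e]; lia.
have lf : forall j', 0 < j' < j -> in_diag mu (i, j').
  move=> j' /andP [h1 h2]; apply: contraT => nd.
  have sk : in_skew la mu (i, j').
    by rewrite /in_skew nd andbT; apply: (diag_down pla dla) => //; lia.
  by have := hmax _ sk; rewrite /= => /(_ (leqnn i) (ltnW h2)) [e]; lia.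
have Fsz : i <= (size mu).+1.
  have [i1|i1] := leqP i 1; first lia.
  have h : 0 < i.-1 < i by apply/andP; split; lia.
  by move: (up _ h); rewrite /in_diag /= => /and4P [_ h2 _ _]; lia.
have Fi2 : 1 < i -> j <= nth 0 mu i.-2.
  move=> i1; have h : 0 < i.-1 < i by apply/andP; split; lia.
  by move: (up _ h); rewrite /in_diag /= => /and4P [_ _ _ h4].
have Fsz2 : 1 < j -> i <= size mu.
  move=> j1; have h : 0 < j.-1 < j by apply/andP; split; lia.
  by move: (lf _ h); rewrite /in_diag /= => /and4P [_ h2 _ _].
have Fr : nth 0 mu i.-1 = j.-1.
  have [j1|j1] := leqP j 1.
    have [isz|isz] := leqP i (size mu).
      have := part_pos pmu (_ : i.-1 < size mu) => /(_ ltac:(lia)) np.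
      by move: nmu; rewrite /in_diag /= pi isz pj /=; lia.
    rewrite nth_default //; lia.
  have h : 0 < j.-1 < j by apply/andP; split; lia.
  move: (lf _ h) nmu; rewrite /in_diag /= => /and4P [_ h2 _ h4].
  by rewrite pi h2 pj /=; lia.
pose nu := mkseq (fun k => if k == i.-1 then j else nth 0 mu k) (maxn (size mu) i).
have Nnu : forall k, nth 0 nu k = if k == i.-1 then j else nth 0 mu k.
  move=> k; have [kl|kl] := ltnP k (maxn (size mu) i); first by rewrite nth_mkseq.
  rewrite nth_default ?size_mkseq //.
  have -> : (k == i.-1) = false by apply/eqP; lia.
  by rewrite nth_default //; lia.
have Snu : size nu = maxn (size mu) i by rewrite size_mkseq.
exists nu; split.
  apply/andP; split.
    apply/(sortedP 0) => k hk; rewrite /= !Nnu.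
    have [e1|e1] := eqVneq k.+1 i.-1.
      have -> : (k == i.-1) = false by apply/eqP; lia.
      by have := Fi2 ltac:(lia); have -> : i.-2 = k by lia.
    have [e2|e2] := eqVneq k i.-1.
      by subst k; have := part_mono pmu (leqnSn i.-1); rewrite Fr; lia.
    exact: part_mono.
  apply/(all_nthP 0) => k hk; rewrite Nnu; case: eqP => ke; first lia.
  apply: part_pos => //; rewrite Snu in hk; lia.
case=> a b; rewrite /in_diag /= Nnu Snu.
have [ai|ai] := eqVneq a i.
  subst a; rewrite eqxx Fr pi /=.
  have -> : i <= maxn (size mu) i by rewrite leq_maxr.
  rewrite /=; apply/idP/idP => [/andP [h3 h4]|/orP [/and3P [h2 h3 h4]|/eqP [e]]].
  - have [bj|bj] := eqVneq b j; first by rewrite bj eqxx orbT.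
    apply/orP; left; apply/and3P; split => //; [apply: Fsz2|]; lia.
  - by apply/andP; split; lia.
  - by rewrite e pj leqnn.
case: a ai => [|a] ai; first by rewrite ltnn /=; apply/esym/eqP => -[e _]; lia.

have -> : (a.+1.-1 == i.-1) = false by apply/eqP; lia.
have -> : ((a.+1, b) == (i, j)) = false by apply/eqP => -[e _]; rewrite e eqxx in ai.
rewrite orbF /=.
have [asz|asz] := leqP a.+1 (size mu).
  by rewrite (leq_trans asz (leq_maxl _ _)).
rewrite (nth_default 0 (_ : size mu <= a)); last by lia.
by case: b => [|b]; rewrite ?andbF.
Qed.

End Geo.

Section Main.
Variables (la mu : seq nat) (T : finType) (le : rel T) (strip : {set T})
  (pos : T -> cell) (anchor top : T -> T) (omega : T -> int).
Hypothesis pla : is_partition la.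
Hypothesis pmu : is_partition mu.
Hypothesis bs : border_strip la mu.
Hypothesis mob : mobile_poset la mu le strip pos anchor top.
Hypothesis oinj : injective omega.
Hypothesis schur : forall x y, x \in strip -> y \in strip ->
     (content (pos x) < content (pos y))%R -> (omega y < omega x)%R.
Hypothesis natl : forall x y, x \notin strip -> covers [set: T] le x y -> (omega x < omega y)%R.

Lemma no2 : forall i j, ~ [/\ in_skew la mu (i, j), in_skew la mu (i.+1, j),
                        in_skew la mu (i, j.+1) & in_skew la mu (i.+1, j.+1)].
Proof. by case: bs. Qed.

Lemma le_antisym : antisymmetric le.
Proof. by case: mob => [[[_ h _] _ _ _ _] _]. Qed.
Lemma pinj : {in strip &, injective pos}.
Proof. by case: mob => [[_ h _ _ _] _]. Qed.
Lemma pskew c : in_skew la mu c <-> exists2 x, x \in strip & pos x = c.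
Proof. by case: mob => [[_ _ h _ _] _]. Qed.
Lemma anS x : anchor x \in strip.
Proof. by case: mob => [[_ _ _ h _] _]. Qed.
Lemma anid x : x \in strip -> anchor x = x.
Proof. by case: mob => [[_ _ _ _ h] _]; apply: h. Qed.
Lemma lestrip a b : b \in strip -> le a b = strip_le (pos (anchor a)) (pos b).
Proof. by case: mob => [_ [h _ _ _ _]]; apply: h. Qed.
Lemma snotle a b : a \in strip -> b \notin strip -> ~~ le a b.
Proof. by case: mob => [_ [_ h _ _ _]]; apply: h. Qed.
Lemma samtop a b : a \notin strip -> b \notin strip -> le a b -> top a = top b.
Proof. by case: mob => [_ [_ _ h _ _]]; apply: h. Qed.
Lemma hang x : x \notin strip ->
  [/\ top x \notin strip, top (top x) = top x & anchor x = anchor (top x)].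
Proof. by case: mob => [_ [_ _ _ h _]]; apply: h. Qed.
Lemma hangle t y : t \notin strip -> top t = t -> y \in hanging strip top t -> le y t.
Proof. by case: mob => [_ [_ _ _ _ h]] ts tt; case: (h t ts tt) => _ _; apply. Qed.

Lemma skew_pos_strip x : x \in strip -> in_skew la mu (pos x).
Proof. by move=> xs; apply/pskew; exists x. Qed.

Lemma strip_le_refl c : strip_le c c.
Proof. by rewrite /strip_le !leqnn. Qed.

Lemma le_anchor x : le x (anchor x).
Proof. by rewrite lestrip ?anS // strip_le_refl. Qed.

Lemma anchor_anchor x : anchor (anchor x) = anchor x.
Proof. by rewrite anid // anS. Qed.

Definition ismax m := maxin le [set: T] m.

Lemma ismaxP m : ismax m = (m \in strip) && `[< inner_corner la mu (pos m) >].
Proof.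
apply/idP/idP.
  move=> mx.
  have ms : m \in strip.
    apply: contraT => ms.
    have := implyP (forall_inP mx (anchor m) (in_setT _)) (le_anchor m).
    by move/eqP => e; move: (anS m); rewrite e (negbTE ms).
  rewrite ms /=; apply/asboolP; apply: max_corner => //.
    exact: skew_pos_strip.
  move=> d /pskew [x xs <-] h1 h2.
  have lmx : le m x by rewrite lestrip // anid // /strip_le h1 h2.
  by have /eqP -> := implyP (forall_inP mx x (in_setT _)) lmx.
case/andP=> ms /asboolP ic.
apply/forall_inP => z _; apply/implyP => lmz.
have zs : z \in strip by apply: contraT => zs; move: (snotle ms zs); rewrite lmz.
move: lmz; rewrite lestrip // anid // /strip_le => /andP [h1 h2].
have := corner_max ic (skew_pos_strip zs) h1 h2.
by move/(pinj zs ms) ->.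
Qed.

Lemma ismax_le u z : ismax u -> le u z -> z = u.
Proof. by move=> mx lz; have /eqP := implyP (forall_inP mx z (in_setT _)) lz. Qed.

Section Corner.
Variable u : T.
Hypothesis us : u \in strip.
Hypothesis uc : inner_corner la mu (pos u).

Let umax : ismax u.
Proof. by rewrite ismaxP us; apply/asboolP. Qed.

Definition cu := content (pos u).
Definition Aset := [set x | (content (pos (anchor x)) < cu)%R].
Definition Bset := ([set: T] :\ u) :\: Aset.

Lemma uA : u \notin Aset.
Proof. by rewrite inE anid // ltxx. Qed.

Lemma AB_union : [set: T] :\ u = Aset :|: Bset.
Proof.
apply/setP => x; rewrite !inE; case: (x =P u) => [->|_] /=.
  by rewrite anid // ltxx.
by case: (_ < _)%R.
Qed.

Lemma AB_disj : [disjoint Aset & Bset].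
Proof. by rewrite -setI_eq0; apply/eqP/setP => x; rewrite !inE; case: (_ < _)%R; rewrite ?andbF. Qed.

Lemma strip_ne_content x : x \in strip -> x != u -> content (pos x) != cu.
Proof.
move=> xs xu; apply/eqP => e; move/eqP: xu; apply.
apply: (pinj xs us); apply: (content_inj pla pmu no2) => //; exact: skew_pos_strip.
Qed.

Lemma cross_AB : cross le Aset Bset.
Proof.
move=> a b; rewrite !inE => ha /andP [hb /andP [bu _]].
rewrite -leNgt in hb.
have pq := skew_pos_strip us.
have [cmu1 cmu2] := corner_mu pla pmu uc.
have anch_ne : anchor a != anchor b.
  by apply/eqP => e; move: ha; rewrite e => /(lt_le_trans) /(_ hb); rewrite ltxx.
split.
- have [bs'|bs'] := boolP (b \in strip).
    rewrite lestrip // /strip_le; apply/negP => /andP [h1 h2].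
    have sp := skew_pos_strip (anS a); have sr := skew_pos_strip bs'.
    have cr : (cu < content (pos b))%R.
      rewrite lt_neqAle; move: hb; rewrite anid // => ->; rewrite andbT eq_sym.
      exact: strip_ne_content.
    have [l1 l2] := content_lt pla pmu no2 sp pq ha.
    have [l3 l4] := content_lt pla pmu no2 pq sr cr.
    have e2 : (pos b).2 = (pos u).2 by lia.
    have l5 : (pos b).1 < (pos u).1.
      move: cr; rewrite /cu /content e2; lia.
    have [p1 _] := skew_pos sr.
    have := cmu1 (pos b).1 ltac:(lia); rewrite -e2 -surjective_pairing.
    by case/andP: sr => _ /negbTE ->.
  have [as'|as'] := boolP (a \in strip); first exact: snotle.
  apply/negP => lab; move: anch_ne.
  case: (hang as') => _ _ ea; case: (hang bs') => _ _ eb.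
  by rewrite ea eb (samtop as' bs' lab) eqxx.
- have [as'|as'] := boolP (a \in strip).
    rewrite lestrip // /strip_le; apply/negP => /andP [h1 h2].
    have sp := skew_pos_strip as'; have sr := skew_pos_strip (anS b).
    have [ebu|nbu] := eqVneq (anchor b) u.
      have : le u a by rewrite lestrip // anid // -ebu /strip_le h1 h2.
      move/(ismax_le umax) => e; move: ha; by rewrite e anid // ltxx.
    have cr : (cu < content (pos (anchor b)))%R.
      rewrite lt_neqAle hb andbT eq_sym; exact: strip_ne_content (anS b) nbu.
    move: ha; rewrite anid // => ha.
    have [l1 l2] := content_lt pla pmu no2 sp pq ha.
    have [l3 l4] := content_lt pla pmu no2 pq sr cr.
    have e1 : (pos a).1 = (pos u).1 by lia.
    have l5 : (pos a).2 < (pos u).2.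
      move: ha; rewrite /cu /content e1; lia.
    have [_ p2] := skew_pos sp.
    have := cmu2 (pos a).2 ltac:(lia); rewrite -e1 -surjective_pairing.
    by case/andP: sp => _ /negbTE ->.
  have [bs'|bs'] := boolP (b \in strip); first exact: snotle.
  apply/negP => lba; move: anch_ne.
  case: (hang as') => _ _ ea; case: (hang bs') => _ _ eb.
  by rewrite ea eb (samtop bs' as' lba) eqxx.
Qed.

Lemma maxA m : m \in Aset -> maxin le Aset m -> (omega u < omega m)%R.
Proof.
move=> mA mx.
have ms : m \in strip.
  apply: contraT => ms.
  have aA : anchor m \in Aset by move: mA; rewrite !inE anchor_anchor.
  have := implyP (forall_inP mx _ aA) (le_anchor m).
  by move/eqP => e; move: (anS m); rewrite e (negbTE ms).
by apply: schur => //; move: mA; rewrite inE anid.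
Qed.

Lemma maxB m : m \in Bset -> maxin le Bset m -> (omega m < omega u)%R.
Proof.
move=> mB mx; move: (mB); rewrite !inE => /andP [hb /andP [mu' _]].
rewrite -leNgt in hb.
have [ms|ms] := boolP (m \in strip).
  apply: schur => //; rewrite lt_neqAle; move: hb; rewrite anid // => ->.
  by rewrite andbT eq_sym strip_ne_content.
have [ebu|nbu] := eqVneq (anchor m) u; last first.
  have aB : anchor m \in Bset.
    by rewrite !inE anchor_anchor nbu /= -leNgt hb andbT.
  have := implyP (forall_inP mx _ aB) (le_anchor m).
  by move/eqP => e; move: (anS m); rewrite e (negbTE ms).
case: (hang ms) => ts ttt eat.
have tB : top m \in Bset.
  rewrite !inE -eat ebu ltxx andbT /=; apply/eqP => e; move: ts; by rewrite e us.
have lmt : le m (top m) by apply: hangle => //; rewrite inE ms eqxx.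
have /eqP tm := implyP (forall_inP mx _ tB) lmt.
apply: natl => //; apply/andP; split; first exact: in_setT.
rewrite in_setT mu' /= lestrip // ebu strip_le_refl /=.
apply/forall_inP => z _; apply/negP => /and4P [zm zu lmz lzu].
have [zs|zs] := boolP (z \in strip).
  move: lmz; rewrite lestrip // ebu -(anid us) -lestrip // => /(ismax_le umax) e.
  by rewrite e eqxx in zu.
have tz : top z = m by rewrite -(samtop ms zs lmz) tm.
have lzm : le z m by rewrite -tm; apply: hangle => //; rewrite inE zs tz tm eqxx.
have e : z = m by apply: le_antisym; rewrite lzm lmz.
by rewrite e eqxx in zm.
Qed.

Lemma Esum_u : Esum le omega (omega u) ([set: T] :\ u) =
  ('X^#|Aset| * eqmaj le omega ([set: T] :\ u))%R.
Proof.
rewrite AB_union; apply: Esum_top => //.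
- exact: AB_disj.
- exact: cross_AB.
- exact: maxA.
- exact: maxB.
Qed.

End Corner.

Lemma main_eq : eqmaj le omega [set: T] =
  (\sum_(u in strip | `[< inner_corner la mu (pos u) >])
     'X^#|[set x | (content (pos (anchor x)) < content (pos u))%R]|
       * eqmaj le omega ([set: T] :\ u))%R.
Proof.
have TN : [set: T] != set0.
  case: bs => _ [c /pskew [x _ _]] _ _; apply/set0Pn; exists x; exact: in_setT.
rewrite eqmaj_rec //; apply: eq_big => [m|m].
  by rewrite in_setT /= -ismaxP.
rewrite in_setT /= => mx; move: (mx); rewrite -/(ismax m) ismaxP => /andP [ms /asboolP ic].
exact: Esum_u.
Qed.

End Main.

Unset Implicit Arguments.

Theorem lemma4p2 (la mu : seq nat) (T : finType) (le : rel T) (strip : {set T})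
  (pos : T -> cell) (anchor top : T -> T) (omega : T -> int) :
  is_partition la -> is_partition mu -> border_strip la mu ->
  mobile_poset la mu le strip pos anchor top ->
  injective omega ->
  (* reversed Schur labeling on the border strip *)
  (forall x y, x \in strip -> y \in strip ->
     (content (pos x) < content (pos y))%R -> (omega y < omega x)%R) ->
  (* natural on the hanging d-complete posets *)
  (forall x y, x \notin strip -> covers [set: T] le x y -> (omega x < omega y)%R) ->
  eqmaj le omega [set: T] =
  (\sum_(u in strip | `[< inner_corner la mu (pos u) >])
     'X^#|[set x | (content (pos (anchor x)) < content (pos u))%R]|
       * eqmaj le omega ([set: T] :\ u))%R.
Proof.
move=> pla pmu bs mob oinj schur natl.
exact: (main_eq pla pmu bs mob oinj schur natl).
Qed.
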